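(* Suppose $(A,W)$ is a $T_1$ Pratt comonoid which is generated by a countably infinite family $S$ of subsets of $A$, and suppose there is a partition of $S$ into finitely many disjoint subsets $S^{(0)},\dots,S^{(k-1)}$ such that no relation $t_0\cup\dots\cup t_{n-1}\supseteq s_0\cap\dots\cap s_{m-1}$ (with all $t_j,s_i\in S$) holding in $W$, in which every $t_j$ is distinct from every $s_i$, has all but at most one of the $s_i$ belonging to the same set $S^{(l)}$. Then $W$ has at least continuum cardinality, and in fact $W$ contains a complete sublattice isomorphic to the lattice of all subsets of $\omega$.
   Context: A Pratt comonoid is a pair $(A,W)$ where $A$ is a set and $W$ is a set of subsets of $A$ such that (i) $\emptyset\in W$ and $A\in W$; (ii) whenever $C\subseteq A\times A$ is such that for every $a\in A$ both the $a$-th row $\{b\mid (a,b)\in C\}$ and the $a$-th column $\{b\mid (b,a)\in C\}$ belong to $W$ (a crossword over $W$), the diagonal $\{b\mid (b,b)\in C\}$ also belongs to $W$. $(A,W)$ is $T_1$ if for all distinct $a,b\in A$ some member of $W$ contains $a$ but not $b$. $(A,W)$ is generated by $S$ if $W$ is the least Pratt comonoid structure on $A$ containing $S$. A complete sublattice of $W$ is a subset of $W$ closed under arbitrary unions and intersections taken in the power set of $A$, not necessarily containing $\emptyset$ or $A$. *)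

(* Defs.v *)
From mathcomp Require Import all_boot.
From mathcomp Require Import boolp classical_sets cardinality.
Set Implicit Arguments. Unset Strict Implicit. Unset Printing Implicit Defensive.
Local Open Scope classical_set_scope.

Definition pratt_comonoid (A : Type) (W : set (set A)) : Prop :=
  W set0 /\ W setT /\
  forall C : set (A * A),
    (forall a : A, W [set b | C (a, b)] /\ W [set b | C (b, a)]) ->
    W [set b | C (b, b)].

Definition pratt_T1 (A : Type) (W : set (set A)) : Prop :=
  forall a b : A, a <> b -> exists U, W U /\ U a /\ ~ U b.

Definition pratt_generated_by (A : Type) (W S : set (set A)) : Prop :=
  pratt_comonoid W /\ S `<=` W /\
  forall W' : set (set A), pratt_comonoid W' -> S `<=` W' -> W `<=` W'.

Definition complete_sublattice (A : Type) (W L : set (set A)) : Prop :=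
  L `<=` W /\
  forall F : set (set A), F `<=` L -> F !=set0 ->
    L (\bigcup_(X in F) X) /\ L (\bigcap_(X in F) X).

Definition is_partition_of (A : Type) (k : nat) (S : set (set A))
  (P : 'I_k -> set (set A)) : Prop :=
  (forall l, P l `<=` S) /\ S `<=` \bigcup_(l in [set: 'I_k]) P l /\
  (forall l l' : 'I_k, l <> l' -> P l `&` P l' = set0).

(* Main.v *)
Require Import Defs.
From mathcomp Require Import all_boot zify.
From mathcomp Require Import boolp classical_sets functions cardinality.
Local Open Scope classical_set_scope.

Lemma pc_union {A : Type} (W : set (set A)) (U V : set A) :
  pratt_comonoid W -> W U -> W V -> W (U `|` V).
Proof.
move=> [W0 [WT Wc]] WU WV.
apply: (Wc (fun p => U p.1 \/ V p.2)) => a; split.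
- have [Ua|nUa] := pselect (U a).
  + suff -> : [set b | U (a, b).1 \/ V (a, b).2] = setT by [].
    by apply/seteqP; split => // b _ /=; left.
  + suff -> : [set b | U (a, b).1 \/ V (a, b).2] = V by [].
    by apply/seteqP; split => b /=; [case | right].
- have [Va|nVa] := pselect (V a).
  + suff -> : [set b | U (b, a).1 \/ V (b, a).2] = setT by [].
    by apply/seteqP; split => // b _ /=; right.
  + suff -> : [set b | U (b, a).1 \/ V (b, a).2] = U by [].
    by apply/seteqP; split => b /=; [case | left].
Qed.

Lemma pc_inter {A : Type} (W : set (set A)) (U V : set A) :
  pratt_comonoid W -> W U -> W V -> W (U `&` V).
Proof.
move=> [W0 [WT Wc]] WU WV.
apply: (Wc (fun p => U p.1 /\ V p.2)) => a; split.
- have [Ua|nUa] := pselect (U a).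
  + suff -> : [set b | U (a, b).1 /\ V (a, b).2] = V by [].
    by apply/seteqP; split => b /=; [case | split].
  + suff -> : [set b | U (a, b).1 /\ V (a, b).2] = set0 by [].
    by apply/seteqP; split => b //= [].
- have [Va|nVa] := pselect (V a).
  + suff -> : [set b | U (b, a).1 /\ V (b, a).2] = U by [].
    by apply/seteqP; split => b /=; [case | split].
  + suff -> : [set b | U (b, a).1 /\ V (b, a).2] = set0 by [].
    by apply/seteqP; split => b //= [].
Qed.

Lemma pc_finU {A : Type} (W : set (set A)) (Q : nat -> set A) (Pr : nat -> Prop) j :
  pratt_comonoid W -> (forall i, W (Q i)) ->
  W [set b | exists i, (i < j)%N /\ Pr i /\ Q i b].
Proof.
move=> pW WQ; elim: j => [|j IH].
  suff -> : [set b | exists i, (i < 0)%N /\ Pr i /\ Q i b] = set0 by case: pW.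
  by apply/seteqP; split => b //= [i []].
have [Pj|nPj] := pselect (Pr j).
- suff -> : [set b | exists i, (i < j.+1)%N /\ Pr i /\ Q i b] =
     [set b | exists i, (i < j)%N /\ Pr i /\ Q i b] `|` Q j by exact: pc_union.
  apply/seteqP; split => b /=.
  + move=> [i [+ [Pi Qi]]]; rewrite ltnS leq_eqVlt => /orP[/eqP Eij|lij].
      by right; rewrite -Eij.
    by left; exists i.
  + by case=> [[i [lij [Pi Qi]]]|Qj]; [exists i; rewrite ltnS ltnW | exists j].
- suff -> : [set b | exists i, (i < j.+1)%N /\ Pr i /\ Q i b] =
     [set b | exists i, (i < j)%N /\ Pr i /\ Q i b] by [].
  apply/seteqP; split => b /=.
  + move=> [i [+ [Pi Qi]]]; rewrite ltnS leq_eqVlt => /orP[/eqP Eij|lij].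
      by rewrite Eij in Pi.
    by exists i.
  + by move=> [i [lij [Pi Qi]]]; exists i; rewrite ltnS ltnW.
Qed.

Definition Dn {A : Type} (a : nat -> set A) (i : nat) : set A :=
  [set x | forall j, (j < i)%N -> a j x].
Definition En {A : Type} (v : nat -> set A) (i : nat) : set A :=
  [set x | exists j, (j <= i)%N /\ v j x].
Definition idx (X : set nat) (i : nat) : nat := if `[< X i >] then i else i.+1.
Definition fX {A : Type} (a v : nat -> set A) (X : set nat) : set A :=
  [set x | exists i, Dn a (idx X i) x /\ En v i x].

Lemma W_Dn {A : Type} (W : set (set A)) a i :
  pratt_comonoid W -> (forall i, W (a i)) -> W (Dn a i).
Proof.
move=> pW Wa; elim: i => [|i IH].
  suff -> : Dn a 0 = setT by case: pW => _ [].
  by apply/seteqP; split.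
suff -> : Dn a i.+1 = Dn a i `&` a i by exact: pc_inter.
apply/seteqP; split => x /=.
- by move=> H; split; [move=> j lji; apply: H; rewrite ltnS ltnW | apply: H].
- move=> [H ai] j; rewrite ltnS leq_eqVlt => /orP[/eqP->//|]; exact: H.
Qed.

Lemma W_En {A : Type} (W : set (set A)) v i :
  pratt_comonoid W -> (forall i, W (v i)) -> W (En v i).
Proof.
move=> pW Wv.
have := pc_finU W v (fun _ => True) i.+1 pW Wv.
suff -> : [set b | exists j, (j < i.+1)%N /\ True /\ v j b] = En v i by [].
apply/seteqP; split => b /=.
  by move=> [j [? [? ?]]]; exists j.
by move=> [j [? ?]]; exists j.
Qed.

Lemma Dn_anti {A : Type} (a : nat -> set A) {m n} : (m <= n)%N -> Dn a n `<=` Dn a m.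
Proof. by move=> lmn x H j ljm; apply: H; exact: leq_trans ljm lmn. Qed.

Lemma En_mono {A : Type} (v : nat -> set A) {m n} : (m <= n)%N -> En v m `<=` En v n.
Proof. by move=> lmn x [j [ljm vj]]; exists j; split => //; exact: leq_trans ljm lmn. Qed.

Lemma idx_ge X i : (i <= idx X i)%N.
Proof. by rewrite /idx; case: ifP. Qed.
Lemma idx_le X i : (idx X i <= i.+1)%N.
Proof. by rewrite /idx; case: ifP. Qed.

Lemma idx_mono X {j i} : (j <= i)%N -> (idx X j <= idx X i)%N.
Proof.
rewrite leq_eqVlt => /orP[/eqP->//|lji].
exact: leq_trans (idx_le X j) (leq_trans lji (idx_ge X i)).
Qed.

Lemma W_fX {A : Type} (W : set (set A)) (a v : nat -> set A) (X : set nat) :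
  pratt_comonoid W -> (forall i, W (a i)) -> (forall i, W (v i)) ->
  ((forall x, exists i, ~ a i x) \/ (forall x, exists i, v i x)) ->
  W (fX a v X).
Proof.
move=> pW Wa Wv dich.
have pW' := pW; case: pW' => W0 [WT Wc].
apply: (Wc (fun p => exists i, Dn a (idx X i) p.1 /\ En v i p.2)) => x; split => /=.
-
  have [[j nj]|allD] := pselect (exists j, ~ Dn a (idx X j) x).
  + suff -> : [set b | exists i, Dn a (idx X i) x /\ En v i b] =
       [set b | exists i, (i < j)%N /\ Dn a (idx X i) x /\ En v i b].
      exact: (pc_finU W (En v) (fun i => Dn a (idx X i) x) j pW (fun i => W_En W v i pW Wv)).
    apply/seteqP; split => b /=.
    * move=> [i [Di Ei]]; exists i; split => //.
      rewrite ltnNge; apply/negP => lji; apply: nj.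
      exact: (Dn_anti a (idx_mono X lji) _ Di).
    * by move=> [i [_ H]]; exists i.
  + have allD' : forall i, Dn a i x.
      move=> i; have := (proj2 (forallNP _) allD) i.
      move=> /contrapT; exact: (Dn_anti a (idx_ge X i)).
    case: dich => [Hd|Hv].
      have [i nai] := Hd x; exfalso; apply: nai; apply: (allD' i.+1); exact: ltnSn.
    suff -> : [set b | exists i, Dn a (idx X i) x /\ En v i b] = setT by [].
    apply/seteqP; split => // b _ /=.
    have [i vi] := Hv b; exists i; split.
      exact: contrapT ((proj2 (forallNP _) allD) i).
    by exists i.
-
  have [[j Ej]|nE] := pselect (exists j, En v j x).
  + suff -> : [set b | exists i, Dn a (idx X i) b /\ En v i x] =
       [set b | exists i, (i < j.+1)%N /\ En v i x /\ Dn a (idx X i) b].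
      exact: (pc_finU W (fun i => Dn a (idx X i)) (fun i => En v i x) j.+1 pW (fun i => W_Dn W a (idx X i) pW Wa)).
    apply/seteqP; split => b /=.
    * move=> [i [Di Ei]].
      have [lij|lji] := leqP i j; first by exists i.
      exists j; split => //; split => //.
      exact: (Dn_anti a (idx_mono X (ltnW lji)) _ Di).
    * by move=> [i [_ [H1 H2]]]; exists i.
  + suff -> : [set b | exists i, Dn a (idx X i) b /\ En v i x] = set0 by [].
    apply/seteqP; split => b //= [i [_ Ei]]; apply: nE; by exists i.
Qed.

Lemma idx_sub (X Y : set nat) i : X `<=` Y -> (idx Y i <= idx X i)%N.
Proof.
move=> XY; rewrite /idx.
case: (asboolP (X i)) => Xi; first by rewrite (asboolT (XY _ Xi)).
by case: ifP.
Qed.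

Lemma fX_mono {A : Type} (a v : nat -> set A) (X Y : set nat) :
  X `<=` Y -> fX a v X `<=` fX a v Y.
Proof.
move=> XY x [i [Di Ei]]; exists i; split => //.
exact: (Dn_anti a (idx_sub X Y i XY) _ Di).
Qed.

Definition zpat {A : Type} (a v : nat -> set A) (z : nat -> A) :=
  forall i, Dn a i (z i) /\ ~ a i (z i) /\ v i (z i) /\ (forall j, (j < i)%N -> ~ v j (z i)).

Lemma fX_refl {A : Type} (a v : nat -> set A) (z : nat -> A) (X Y : set nat) :
  zpat a v z -> fX a v X `<=` fX a v Y -> X `<=` Y.
Proof.
move=> zp XY i Xi; apply: contrapT => nYi.
have [Dz [naz [vz nvz]]] := zp i.
have : fX a v X (z i).
  exists i; split; last by exists i.
  by rewrite /idx (asboolT Xi).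
move=> /XY [j [Dj [j' [lj'j vj']]]].
have lij' : (i <= j')%N.
  by rewrite leqNgt; apply/negP => lt; exact: (nvz _ lt vj').
have lt : (i < idx Y j)%N.
  rewrite leq_eqVlt in lij'; case/orP: lij' => [/eqP eij'|lij'].
    rewrite -eij' in lj'j; rewrite leq_eqVlt in lj'j; case/orP: lj'j => [/eqP eij|lij].
      by rewrite -eij /idx (asboolF nYi).
    exact: leq_trans lij (idx_ge Y j).
  exact: leq_trans (leq_trans lij' lj'j) (idx_ge Y j).
by apply: naz; apply: Dj.
Qed.

Lemma fX_bigcup {A : Type} (a v : nat -> set A) (F : set (set A)) :
  F `<=` range (fX a v) -> F !=set0 ->
  \bigcup_(U in F) U = fX a v (\bigcup_(Y in [set Y | F (fX a v Y)]) Y).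
Proof.
move=> Fr [U0 FU0]; apply/seteqP; split => x.
- move=> [U FU Ux]; have [Y _ eY] := Fr U FU.
  rewrite -eY in FU Ux.
  apply: (fX_mono a v Y) => //.
  by move=> n Yn; exists Y.
- move=> [i [Di Ei]].
  case: (asboolP ((\bigcup_(Y in [set Y | F (fX a v Y)]) Y) i)) => [[Y FY Yi]|nU].
    exists (fX a v Y) => //; exists i; split => //.
    move: Di; rewrite /idx (asboolT Yi).
    by rewrite asboolT //; exists Y.
  have [Y0 _ eY0] := Fr U0 FU0.
  exists U0 => //; rewrite -eY0; exists i; split => //.
  move: Di; rewrite /idx (asboolF nU) => Di.
  exact: (Dn_anti a (idx_le Y0 i) _ Di).
Qed.

Lemma fX_bigcap {A : Type} (a v : nat -> set A) (F : set (set A)) :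
  F `<=` range (fX a v) -> F !=set0 ->
  \bigcap_(U in F) U = fX a v (\bigcap_(Y in [set Y | F (fX a v Y)]) Y).
Proof.
move=> Fr [U0 FU0]; apply/seteqP; split => x; last first.
  move=> Hx U FU; have [Y _ eY] := Fr U FU.
  have sub : (\bigcap_(Y in [set Y | F (fX a v Y)]) Y) `<=` Y.
    by move=> n; apply; rewrite /= eY.
  by rewrite -eY; exact: (fX_mono a v _ _ sub _ Hx).
move=> Hx.
have [Y0 _ eY0] := Fr U0 FU0.
have := Hx U0 FU0; rewrite -eY0 => -[i0 [_ Ei0]].
have exE : exists n, `[< En v n x >] by exists i0; apply/asboolP.
case: (ex_minnP exE) => n /asboolP En_ minn.
have minn' : forall m, En v m x -> (n <= m)%N.
  by move=> m Em; apply: minn; apply/asboolP.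
have [Dn1|nDn1] := pselect (Dn a n.+1 x).
  exists n; split => //; exact: (Dn_anti a (idx_le _ n) _ Dn1).
have key : forall Y, F (fX a v Y) -> Y n /\ Dn a n x.
  move=> Y FY; have [i [Di Ei]] := Hx _ FY.
  have lni := minn' _ Ei.
  rewrite leq_eqVlt in lni; case/orP: lni => [/eqP eni|lni].
    rewrite -eni in Di; move: Di; rewrite /idx.
    case: (asboolP (Y n)) => Yn Di; first by [].
    by exfalso.
  exfalso; apply: nDn1; exact: (Dn_anti a (leq_trans lni (idx_ge Y i)) _ Di).
have FY0 : F (fX a v Y0) by rewrite eY0.
exists n; split => //.
rewrite /idx asboolT; first exact: (key _ FY0).2.
by move=> Y FY; exact: (key _ FY).1.
Qed.

Lemma staircase_concl {A : Type} (W : set (set A)) (a v : nat -> set A) (z : nat -> A) :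
  pratt_comonoid W -> (forall i, W (a i)) -> (forall i, W (v i)) ->
  ((forall x, exists i, ~ a i x) \/ (forall x, exists i, v i x)) ->
  zpat a v z ->
  (exists g : set nat -> set A, injective g /\ forall X, W (g X)) /\
  (exists (L : set (set A)) (f : set nat -> set A),
      complete_sublattice W L /\
      L = range f /\
      forall X Y : set nat, X `<=` Y <-> f X `<=` f Y).
Proof.
move=> pW Wa Wv dich zp.
have WfX : forall X, W (fX a v X) by move=> X; exact: W_fX.
have ord : forall X Y : set nat, X `<=` Y <-> fX a v X `<=` fX a v Y.
  by move=> X Y; split; [exact: fX_mono | exact: fX_refl zp].
split.
  exists (fX a v); split => // X Y eXY.
  by apply/seteqP; split; apply/ord; rewrite eXY.
exists (range (fX a v)), (fX a v); split; last by split.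
split; first by move=> U [X _ <-].
move=> F Fr F0; split.
  by rewrite (fX_bigcup a v F Fr F0); eexists.
by rewrite (fX_bigcap a v F Fr F0); eexists.
Qed.

Lemma T1S {A : Type} (W S : set (set A)) (p q : A) :
  pratt_T1 W -> pratt_generated_by W S -> p <> q ->
  exists s, S s /\ s p /\ ~ s q.
Proof.
move=> T1 [_ [_ gen]] npq; apply: contrapT => nex.
pose W' := [set U : set A | U p -> U q].
have pW' : pratt_comonoid W'.
  split; first by [].
  split; first by [].
  move=> C HC /= Cpp.
  have Cpq : C (p, q) by apply: (HC p).1.
  by apply: (HC q).2.
have SW' : S `<=` W'.
  move=> s Ss sp; apply: contrapT => nsq; apply: nex; by exists s.
have [U [WU [Up nUq]]] := T1 p q npq.
by apply: nUq; apply: (gen W' pW' SW' U WU).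
Qed.

Lemma enum_nat {A : Type} (B : set (set A)) : countable B -> infinite_set B ->
  exists v : nat -> set A, set_bij [set: nat] B v.
Proof.
move=> cB iB.
have := eq_card_nat cB iB. rewrite card_eq_sym.
move/card_set_bijP => [f fb]. by exists f.
Qed.

Lemma get_z {A : Type} (S : set (set A)) (k : nat) (P : 'I_k -> set (set A)) (l : 'I_k)
  (a v : nat -> set A) :
  (forall (n m : nat) (t : 'I_n -> set A) (s : 'I_m -> set A),
      (forall j, S (t j)) -> (forall i, S (s i)) ->
      (forall j i, t j <> s i) ->
      \bigcap_(i in [set: 'I_m]) s i `<=` \bigcup_(j in [set: 'I_n]) t j ->
      ~ (exists (l : 'I_k) (i0 : nat),
            forall i : 'I_m, nat_of_ord i <> i0 -> P l (s i))) ->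
  P l `<=` S ->
  (forall i, P l (a i)) -> (forall i, S (v i)) ->
  (forall i j, a i = a j -> i = j) -> (forall i j, v i = v j -> i = j) ->
  (forall i j, a i <> v j) ->
  exists z, zpat a v z.
Proof.
move=> Hrel PS Pa Sv ainj vinj aNv.
suff H : forall i, exists x, Dn a i x /\ ~ a i x /\ v i x /\ (forall j, (j < i)%N -> ~ v j x).
  by have [z zP] := choice H; exists z.
move=> i.
pose t : 'I_i.+1 -> set A := fun j => if (j : nat) == 0%N then a i else v (j.-1).
pose s : 'I_i.+1 -> set A := fun j => if ((j : nat) < i)%N then a j else v i.
apply: contrapT => nex.
apply: (Hrel i.+1 i.+1 t s).
- by move=> j; rewrite /t; case: ifP => _; [apply: PS|].
- by move=> j; rewrite /s; case: ifP => _; [apply: PS|].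
- move=> j j'; rewrite /t /s; case: eqP => [j0|jn0]; case: ifP => lj'.
  + by move=> /ainj eij; rewrite -eij ltnn in lj'.
  + exact: aNv.
  + by move=> e; apply: (aNv j' (j.-1)); rewrite e.
  + move=> /vinj ej; have := ltn_ord j; move: jn0 ej.
    by case: (nat_of_ord j) => [//|jj] _ /= ->; rewrite ltnn.
- move=> x Hs; apply: contrapT => nt; apply: nex; exists x.
  split.
    move=> j lji; have := Hs (Ordinal (ltn_trans lji (ltnSn i))) I.
    by rewrite /s /= lji.
  split.
    move=> aix; apply: nt; exists ord0 => //.
  split.
    by have := Hs ord_max I; rewrite /s /= ltnn.
  move=> j lji vjx; apply: nt.
  have lj1 : (j.+1 < i.+1)%N by rewrite ltnS.
  by exists (Ordinal lj1).
- exists l, i => j nji; rewrite /s.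
  have lji : ((j : nat) < i)%N.
    by have := ltn_ord j; rewrite ltnS leq_eqVlt => /orP[/eqP|].
  by rewrite lji.
Qed.

Lemma dich3 {A : Type} (W S : set (set A)) (a v : nat -> set A) :
  pratt_T1 W -> pratt_generated_by W S ->
  (forall s, S s -> (exists i, s = a i) \/ (exists j, s = v j)) ->
  (forall x, exists i, ~ a i x) \/ (forall x, exists i, v i x) \/
  exists q, forall s, S s -> (s q <-> exists i, s = a i).
Proof.
move=> T1 gen cov.
have [H1|nH1] := pselect (forall x, exists i, ~ a i x); first by left.
have [H2|nH2] := pselect (forall x, exists i, v i x); first by right; left.
right; right.
have [q Hq] : exists q, forall i, a i q.
  move/existsNP: nH1 => [q nq]; exists q => i.
  by apply: contrapT => naq; apply: nq; exists i.
have [r Hr] : exists r, forall j, ~ v j r.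
  move/existsNP: nH2 => [r nr]; exists r => j vj.
  by apply: nr; exists j.
have eqr : q = r.
  apply: contrapT => nqr.
  have [s [Ss [sr nsq]]] := T1S W S r q T1 gen (nesym nqr).
  case: (cov s Ss) => [[i ei]|[j ej]]; first by apply: nsq; rewrite ei.
  by apply: (Hr j); rewrite -ej.
exists q => s Ss; split.
  move=> sq; case: (cov s Ss) => // [[j ej]].
  by exfalso; apply: (Hr j); rewrite -ej -eqr.
by move=> [i ->].
Qed.

Lemma build {A : Type} (W S : set (set A)) (k : nat) (P : 'I_k -> set (set A)) (l : 'I_k)
  (e : nat -> set A) (d : nat) :
  pratt_T1 W -> pratt_generated_by W S -> countable S ->
  (forall (n m : nat) (t : 'I_n -> set A) (s : 'I_m -> set A),
      (forall j, S (t j)) -> (forall i, S (s i)) ->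
      (forall j i, t j <> s i) ->
      \bigcap_(i in [set: 'I_m]) s i `<=` \bigcup_(j in [set: 'I_n]) t j ->
      ~ (exists (l : 'I_k) (i0 : nat),
            forall i : 'I_m, nat_of_ord i <> i0 -> P l (s i))) ->
  P l `<=` S -> (forall n, P l (e n)) -> (forall n m, e n = e m -> n = m) ->
  ~~ odd d ->
  ((exists g : set nat -> set A, injective g /\ forall X, W (g X)) /\
  (exists (L : set (set A)) (f : set nat -> set A),
      complete_sublattice W L /\
      L = range f /\
      forall X Y : set nat, X `<=` Y <-> f X `<=` f Y)) \/
  exists q, forall s, S s -> (s q <-> exists i, s = e (i.*2 + d)).
Proof.
move=> T1 gen cS Hrel PS Pe einj evd.
pose a i := e (i.*2 + d).
pose B := S `\` range a.
have BS : B `<=` S by move=> s [].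
have cB : countable B := sub_countable (subset_card_le BS) cS.
have iB : infinite_set B.
  apply/infiniteP.
  have /Pinj[h hE] : {in setT &, injective (fun n => e n.*2.+1)}.
    by move=> n m _ _ /einj; lia.
  have /injPfun[g _] : {homo h : x / setT x >-> B x}.
    move=> n _; rewrite -hE /B /=; split; first exact: PS.
    move=> [i _ /einj]; rewrite /a => H.
    have : odd (i.*2 + d) = odd (n.*2.+1) by rewrite H.
    by rewrite oddD odd_double /= (negbTE evd) /= odd_double.
  by apply/pcard_leP; squash g.
have [v [vf vi vs]] := enum_nat B cB iB.
have vinj : forall i j, v i = v j -> i = j.
  by move=> i j; apply: vi; rewrite in_setT.
have ainj : forall i j, a i = a j -> i = j by move=> i j /einj; lia.
have aNv : forall i j, a i <> v j.
  move=> i j eij; have [_ nr] := vf j I; apply: nr; by exists i.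
have cov : forall s, S s -> (exists i, s = a i) \/ (exists j, s = v j).
  move=> s Ss; have [[i _ ei]|nr] := pselect (range a s); first by left; exists i.
  right; have [j _ ej] := vs s (conj Ss nr); by exists j.
have pW := gen.1.
have SW := gen.2.1.
have Wa : forall i, W (a i) by move=> i; apply: SW; exact: PS (Pe _).
have Wv : forall i, W (v i) by move=> i; apply: SW; exact: BS (vf i I).
case: (dich3 W S a v T1 gen cov) => [H1|[H2|[q Hq]]].
- left; have [z zp] := get_z S k P l a v Hrel PS (fun i => Pe _) (fun i => BS _ (vf i I)) ainj vinj aNv.
  exact: (staircase_concl W a v z pW Wa Wv (or_introl H1) zp).
- left; have [z zp] := get_z S k P l a v Hrel PS (fun i => Pe _) (fun i => BS _ (vf i I)) ainj vinj aNv.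
  exact: (staircase_concl W a v z pW Wa Wv (or_intror H2) zp).
- by right; exists q.
Qed.

Theorem corollary7p11 (A : Type) (W S : set (set A)) (k : nat)
  (P : 'I_k -> set (set A)) :
  pratt_T1 W ->
  pratt_generated_by W S ->
  countable S -> infinite_set S ->
  is_partition_of S P ->
  (forall (n m : nat) (t : 'I_n -> set A) (s : 'I_m -> set A),
      (forall j, S (t j)) -> (forall i, S (s i)) ->
      (forall j i, t j <> s i) ->
      \bigcap_(i in [set: 'I_m]) s i `<=` \bigcup_(j in [set: 'I_n]) t j ->
      ~ (exists (l : 'I_k) (i0 : nat),
            forall i : 'I_m, nat_of_ord i <> i0 -> P l (s i))) ->
  (exists g : set nat -> set A, injective g /\ forall X, W (g X)) /\
  (exists (L : set (set A)) (f : set nat -> set A),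
      complete_sublattice W L /\
      L = range f /\
      forall X Y : set nat, X `<=` Y <-> f X `<=` f Y).
Proof.
move=> T1 gen cS iS part Hrel.
have [l il] : exists l, infinite_set (P l).
  apply: contrapT => nex; apply: iS.
  apply: (sub_finite_set part.2.1).
  apply: bigcup_finite; first exact: finite_finset.
  move=> l _; apply: contrapT => nf; apply: nex; by exists l.
have PS : P l `<=` S := part.1 l.
have cP : countable (P l) := sub_countable (subset_card_le PS) cS.
have [e [ef ei _]] := enum_nat (P l) cP il.
have einj : forall n m, e n = e m -> n = m.
  by move=> n m; apply: ei; rewrite in_setT.
have Pe : forall n, P l (e n) by move=> n; exact: ef n I.
case: (build W S k P l e 0 T1 gen cS Hrel PS Pe einj erefl) => [//|[q1 H1]].
case: (build W S k P l e 2 T1 gen cS Hrel PS Pe einj erefl) => [//|[q2 H2]].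
exfalso.
have eq12 : q1 = q2.
  apply: contrapT => nq.
  have [s [Ss [sq2 nsq1]]] := T1S W S q2 q1 T1 gen (nesym nq).
  have [i ei2] := (H2 s Ss).1 sq2.
  apply: nsq1; apply/(H1 s Ss); exists i.+1; rewrite ei2; congr e; lia.
have Se0 : S (e 0) := PS _ (Pe 0).
have : e 0 q1 by apply/(H1 _ Se0); exists 0.
rewrite eq12 => /(H2 _ Se0) [i /einj]; lia.
Qed.
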